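(* Let $h:\mathbb{R}\to\mathbb{R}$ be of class $C^1$, let $x_0\in\mathbb{R}$, and let $\Phi$ be a real function of class $C^2$ on an interval $]x_-,x_+[$ with $x_-<x_0<x_+$, such that $h(x)\neq\Phi^2(x)$ for all $x\in]x_-,x_+[$. Define on $]x_-,x_+[$ \[ u_{\mathtt{top}}(x)=\exp\left[\int_{x_0}^{x}d\xi\,\Phi(\xi)\frac{\Phi'(\xi)-\sqrt{\left[h(\xi)-\Phi^{2}(\xi)\right]^{2}+\left[\Phi'(\xi)\right]^{2}}}{h(\xi)-\Phi^{2}(\xi)}\right], \] \[ u_{\mathtt{bot}}(x)=\exp\left[\int_{x_0}^{x}d\xi\,\Phi(\xi)\frac{\Phi'(\xi)+\sqrt{\left[h(\xi)-\Phi^{2}(\xi)\right]^{2}+\left[\Phi'(\xi)\right]^{2}}}{h(\xi)-\Phi^{2}(\xi)}\right]. \] Then $u(x)=A\,u_{\mathtt{top}}(x)+B\,u_{\mathtt{bot}}(x)$, with $A,B$ arbitrary constants, is the general solution of $u''(x)+h(x)u(x)=0$ on $]x_-,x_+[$ if and only if $\Phi$ satisfies on $]x_-,x_+[$ the equation \[ \Phi''(x)=\frac{3\Phi^{2}(x)+h(x)}{\Phi^{2}(x)-h(x)}\frac{\left[\Phi'(x)\right]^{2}}{\Phi(x)}-\frac{h'(x)\Phi'(x)}{\Phi^{2}(x)-h(x)}+\frac{\Phi^{4}(x)-h^{2}(x)}{\Phi(x)}. \]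
   Context: The equation for $\Phi$ is the equation satisfied by geodesic curves, written in explicit form $\varPhi=\Phi(x)$, of the Riemannian metric $g_h=\left[(h(x)-\varPhi^2)^2dx^2+d\varPhi^2\right]/\varPhi^2$ on $\{(x,\varPhi)\mid\varPhi>0,\ \varPhi^2\neq h(x)\}$, a metric of constant curvature $-1$. *)

(* Defs.v *)
From Stdlib Require Import Reals.
From Coquelicot Require Import Coquelicot.
Open Scope R_scope.

Definition in_ioo (a b x : R) : Prop := a < x < b.

Definition integrand_top (h Phi : R -> R) (xi : R) : R :=
  Phi xi * (Derive Phi xi
            - sqrt ((h xi - (Phi xi)^2)^2 + (Derive Phi xi)^2))
         / (h xi - (Phi xi)^2).

Definition integrand_bot (h Phi : R -> R) (xi : R) : R :=
  Phi xi * (Derive Phi xi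
            + sqrt ((h xi - (Phi xi)^2)^2 + (Derive Phi xi)^2))
         / (h xi - (Phi xi)^2).

Definition u_top (h Phi : R -> R) (x0 x : R) : R :=
  exp (RInt (integrand_top h Phi) x0 x).

Definition u_bot (h Phi : R -> R) (x0 x : R) : R :=
  exp (RInt (integrand_bot h Phi) x0 x).

Definition is_solution (h : R -> R) (a b : R) (u : R -> R) : Prop :=
  forall x, in_ioo a b x ->
    ex_derive u x /\ ex_derive (Derive u) x /\
    Derive (Derive u) x + h x * u x = 0.

Definition general_solution (h : R -> R) (a b : R) (u1 u2 : R -> R) : Prop :=
  forall u : R -> R,
    is_solution h a b u <->
    exists A B : R, forall x, in_ioo a b x -> u x = A * u1 x + B * u2 x.

(* The ODE for Phi at x; the right-hand side contains 1/Phi(x), so the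
   equation is only meaningful where Phi(x) <> 0, which we require. *)
Definition Phi_equation (h Phi : R -> R) (x : R) : Prop :=
  Phi x <> 0 /\
  Derive (Derive Phi) x =
    (3 * (Phi x)^2 + h x) / ((Phi x)^2 - h x) * (Derive Phi x)^2 / Phi x
    - Derive h x * Derive Phi x / ((Phi x)^2 - h x)
    + ((Phi x)^4 - (h x)^2) / Phi x.

(* Main.v *)
Require Import Defs.
From Stdlib Require Import Reals Lra Psatz FunctionalExtensionality.
From Coquelicot Require Import Coquelicot.
Open Scope R_scope.

Ltac rfix := match goal with |- ?a = ?b => change (@eq R a b) end.
Lemma der_eq (f : R -> R) x l l' : is_derive f x l -> l = l' -> is_derive f x l'.
Proof. intros H ->; exact H. Qed.

Lemma der_mult (f g : R -> R) x df dg : is_derive f x df -> is_derive g x dg ->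
  is_derive (fun t => f t * g t) x (df * g x + f x * dg).
Proof. intros Hf Hg. apply (is_derive_mult f g); auto. intros; apply Rmult_comm. Qed.

Lemma der_plus (f g : R -> R) x df dg : is_derive f x df -> is_derive g x dg ->
  is_derive (fun t => f t + g t) x (df + dg).
Proof. intros Hf Hg. apply (is_derive_plus f g); auto. Qed.

Lemma der_minus (f g : R -> R) x df dg : is_derive f x df -> is_derive g x dg ->
  is_derive (fun t => f t - g t) x (df - dg).
Proof. intros Hf Hg. apply (is_derive_minus f g); auto. Qed.

Lemma der_scal (f : R -> R) x k df : is_derive f x df ->
  is_derive (fun t => k * f t) x (k * df).
Proof. intros Hf. apply is_derive_scal; auto. Qed.

Lemma locally_I a b x : in_ioo a b x -> locally x (fun y => in_ioo a b y).
Proof. intro H. exact (open_and _ _ (open_gt a) (open_lt b) x H). Qed.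

Lemma const_I (F : R -> R) a b : (forall y, in_ioo a b y -> is_derive F y 0) ->
  forall x y, in_ioo a b x -> in_ioo a b y -> F x = F y.
Proof.
  intros HF x y Hx Hy.
  destruct (MVT_gen F x y (fun _ => 0)) as [c [_ Hc]].
  - intros z Hz. apply HF. unfold in_ioo in *.
    destruct Hz as [H1 H2].
    split; [apply Rle_lt_trans with (Rmin x y) | apply Rlt_le_trans with (Rmax x y)]; auto.
    + apply Rmin_glb; lra.
    + apply Rmax_lub; lra.
  - intros z Hz. apply continuity_pt_filterlim.
    cut (continuous F z). { intro Hc; exact Hc. }
    apply (ex_derive_continuous (K := R_AbsRing) (V := R_NormedModule)).
    exists 0. apply HF. unfold in_ioo in *.
    destruct Hz as [H1 H2].
    split; [apply Rlt_le_trans with (Rmin x y) | apply Rle_lt_trans with (Rmax x y)]; auto.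
    + apply Rmin_glb_lt; lra.
    + apply Rmax_lub_lt; lra.
  - lra.
Qed.

Lemma sol_of (u v v1 v2 : R -> R) a b x : in_ioo a b x ->
  (forall y, in_ioo a b y -> u y = v y) ->
  (forall y, in_ioo a b y -> is_derive v y (v1 y)) ->
  (forall y, in_ioo a b y -> is_derive v1 y (v2 y)) ->
  is_derive u x (v1 x) /\ is_derive (Derive u) x (v2 x).
Proof.
  intros Hx Huv Hv Hv1.
  assert (Hd : forall y, in_ioo a b y -> is_derive u y (v1 y)).
  { intros y Hy. apply (is_derive_ext_loc v u).
    - generalize (locally_I a b y Hy). apply filter_imp. intros; symmetry; auto.
    - auto. }
  split; auto.
  apply (is_derive_ext_loc v1 (Derive u)); auto.
  generalize (locally_I a b x Hx). apply filter_imp. intros y Hy.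
  symmetry. apply is_derive_unique. auto.
Qed.

Definition SS (h Phi : R -> R) x := sqrt ((h x - Phi x ^2)^2 + Derive Phi x ^2).
Definition fe (e : R) (h Phi : R -> R) x :=
  Phi x * (Derive Phi x + e * SS h Phi x) / (h x - Phi x ^ 2).
Definition dfe (e : R) (h Phi : R -> R) x :=
  let p := Phi x in let p1 := Derive Phi x in let p2 := Derive (Derive Phi) x in
  let hh := h x in let h1 := Derive h x in let D := hh - p^2 in
  let S := SS h Phi x in let D1 := h1 - 2*p*p1 in let S1 := (D*D1 + p1*p2)/S in
  (p1*(p1+e*S) + p*(p2+e*S1))/D - p*(p1+e*S)*D1/D^2.
Definition EE (h Phi : R -> R) x :=
  let p := Phi x in let p1 := Derive Phi x in let p2 := Derive (Derive Phi) x in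
  let hh := h x in let h1 := Derive h x in let D := hh - p^2 in
  D*(p1^2 + p*p2) - p*p1*h1 + 4*p^2*p1^2 + (p^2+hh)*D^2.
Definition Ric e h Phi x := dfe e h Phi x + fe e h Phi x ^ 2 + h x.

Lemma SS_pos h Phi x : h x <> Phi x ^ 2 -> 0 < SS h Phi x.
Proof.
  intro H. unfold SS. apply sqrt_lt_R0.
  assert (h x - Phi x ^2 <> 0) by lra.
  assert (0 < (h x - Phi x ^2)^2) by (apply pow2_gt_0; auto). nra.
Qed.

Lemma dfe_ok e h Phi x : ex_derive h x -> ex_derive Phi x -> ex_derive (Derive Phi) x ->
  h x <> Phi x ^ 2 -> is_derive (fe e h Phi) x (dfe e h Phi x).
Proof.
  intros Hh HP HP1 HD.
  assert (HS := SS_pos h Phi x HD).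
  assert (HD' : h x - Phi x ^2 <> 0) by lra.
  unfold fe, dfe, SS in *.
  auto_derive.
  - repeat split; auto.
  - replace ((h x + - (Phi x * (Phi x * 1))) * ((h x + - (Phi x * (Phi x * 1))) * 1) +
      Derive Phi x * (Derive Phi x * 1)) with ((h x - Phi x ^ 2) ^ 2 + Derive Phi x ^ 2) by ring.
    assert (0 < (h x - Phi x^2)^2) by (apply pow2_gt_0; auto). nra.
  - replace ((h x + - (Phi x * (Phi x * 1))) * ((h x + - (Phi x * (Phi x * 1))) * 1) +
      Derive Phi x * (Derive Phi x * 1)) with ((h x - Phi x ^ 2) ^ 2 + Derive Phi x ^ 2) by ring.
    change (fun x0 : R => Phi x0) with Phi.
    change (fun x0 : R => h x0) with h.
    change (fun x0 : R => Derive Phi x0) with (Derive Phi).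
    set (S := sqrt _) in *.
    field. lra.
Qed.

Lemma key (e p p1 p2 hh h1 S : R) :
  (e = 1 \/ e = -1) -> hh - p^2 <> 0 -> S <> 0 -> S^2 = (hh - p^2)^2 + p1^2 ->
  (((p1*(p1+e*S) + p*(p2+e*(((hh - p^2)*(h1 - 2*p*p1) + p1*p2)/S)))/(hh - p^2) - p*(p1+e*S)*(h1 - 2*p*p1)/(hh - p^2)^2)
   + (p*(p1+e*S)/(hh - p^2))^2 + hh) * (hh - p^2)^2 * S
  = ((hh - p^2)*(p1^2 + p*p2) - p*p1*h1 + 4*p^2*p1^2 + (p^2+hh)*(hh - p^2)^2) * (S + e*p1).
Proof.
  intros He HD HS HS2.
  destruct He as [-> | ->]; field_simplify; try (split; assumption);
  replace (S^3) with (S*S^2) by ring; rewrite HS2; ring.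
Qed.

Lemma Ric_EE e h Phi x : (e = 1 \/ e = -1) -> h x <> Phi x ^ 2 ->
  (Ric e h Phi x = 0 <-> EE h Phi x = 0).
Proof.
  intros He HD.
  assert (HS := SS_pos h Phi x HD).
  assert (HD' : h x - Phi x ^2 <> 0) by lra.
  assert (HS2 : SS h Phi x ^ 2 = (h x - Phi x ^2)^2 + Derive Phi x ^2).
  { unfold SS. rewrite pow2_sqrt; auto.
    assert (0 < (h x - Phi x^2)^2) by (apply pow2_gt_0; auto). nra. }
  assert (Hk := key e (Phi x) (Derive Phi x) (Derive (Derive Phi) x) (h x) (Derive h x)
     (SS h Phi x) He HD' (Rgt_not_eq _ _ HS) HS2).
  assert (Hpos : 0 < SS h Phi x + e * Derive Phi x).
  { assert (0 < (h x - Phi x^2)^2) by (apply pow2_gt_0; auto).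
    destruct He as [-> | ->]; nra. }
  assert (HD2 : 0 < (h x - Phi x^2)^2) by (apply pow2_gt_0; auto).
  unfold Ric, dfe, fe, EE. cbv zeta.
  split; intro H0.
  - rewrite H0 in Hk. nra.
  - rewrite H0 in Hk.
    assert (Hm : 0 < (h x - Phi x ^ 2) ^ 2 * SS h Phi x) by nra.
    apply (Rmult_eq_reg_r ((h x - Phi x ^ 2) ^ 2 * SS h Phi x)); [|lra].
    rewrite <- Rmult_assoc. lra.
Qed.

Lemma EE_Phi h Phi x : h x <> Phi x ^ 2 -> (EE h Phi x = 0 <-> Phi_equation h Phi x).
Proof.
  intro HD. assert (HD' : h x - Phi x ^2 <> 0) by lra.
  unfold EE, Phi_equation. cbv zeta.
  set (p := Phi x) in *. set (p1 := Derive Phi x). set (p2 := Derive (Derive Phi) x).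
  set (hh := h x) in *. set (h1 := Derive h x).
  split.
  - intro H0.
    assert (Hp : p <> 0).
    { intro Hp. rewrite Hp in H0, HD'.
      assert (hh * (p1^2 + hh^2) = 0) by (rewrite <- H0; ring).
      apply Rmult_integral in H. destruct H as [H|H].
      + apply HD'. rewrite H. ring.
      + apply HD'. nra. }
    split; auto.
    assert (Hm : p^2 - hh <> 0) by lra.
    apply (Rmult_eq_reg_l (p * (hh - p^2))); [| apply Rmult_integral_contrapositive; auto].
    rewrite <- (Rminus_0_r (p * (hh - p ^ 2) * p2)). rewrite <- H0.
    field. auto.
  - intros [Hp H0]. rewrite H0. field. split; auto. lra.
Qed.

Definition Reg (h Phi : R -> R) a b := forall x, in_ioo a b x ->
  ex_derive h x /\ ex_derive Phi x /\ ex_derive (Derive Phi) x /\ h x <> Phi x ^ 2.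

Definition ue e h Phi x0 x := exp (RInt (fe e h Phi) x0 x).

Lemma ue_x0 e h Phi x0 : ue e h Phi x0 x0 = 1.
Proof. unfold ue. rewrite RInt_point. apply exp_0. Qed.

Lemma ue_deriv e h Phi a b x0 x : Reg h Phi a b -> in_ioo a b x0 -> in_ioo a b x ->
  is_derive (ue e h Phi x0) x (fe e h Phi x * ue e h Phi x0 x).
Proof.
  intros HR H0 Hx.
  assert (Hc : forall y, in_ioo a b y -> continuous (fe e h Phi) y).
  { intros y Hy. destruct (HR y Hy) as [? [? [? ?]]].
    apply (ex_derive_continuous (K := R_AbsRing) (V := R_NormedModule)).
    exists (dfe e h Phi y). apply dfe_ok; auto. }
  unfold ue.
  apply der_eq with (scal (fe e h Phi x) (exp (RInt (fe e h Phi) x0 x))).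
  2:{ reflexivity. }
  apply (is_derive_comp exp (fun y => RInt (fe e h Phi) x0 y)).
  - apply is_derive_exp.
  - apply (is_derive_RInt (fe e h Phi) _ x0).
    + generalize (locally_I a b x Hx). apply filter_imp. intros y Hy.
      apply (RInt_correct (V := R_CompleteNormedModule)). apply (ex_RInt_continuous (V := R_CompleteNormedModule)). intros z Hz. apply Hc.
      unfold in_ioo in *. destruct Hz as [H1 H2].
      split; [apply Rlt_le_trans with (Rmin x0 y) | apply Rle_lt_trans with (Rmax x0 y)]; auto.
      * apply Rmin_glb_lt; lra.
      * apply Rmax_lub_lt; lra.
    + auto.
Qed.

Lemma ue_two e h Phi a b x0 u x : Reg h Phi a b -> in_ioo a b x0 -> in_ioo a b x ->
  (forall y, in_ioo a b y -> u y = ue e h Phi x0 y) ->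
  is_derive u x (fe e h Phi x * ue e h Phi x0 x) /\
  is_derive (Derive u) x ((dfe e h Phi x + fe e h Phi x ^ 2) * ue e h Phi x0 x).
Proof.
  intros HR H0 Hx Hu.
  apply (sol_of u (ue e h Phi x0) (fun y => fe e h Phi y * ue e h Phi x0 y)
    (fun y => (dfe e h Phi y + fe e h Phi y ^ 2) * ue e h Phi x0 y) a b); auto.
  - intros y Hy. apply (ue_deriv e h Phi a b); auto.
  - intros y Hy. destruct (HR y Hy) as [? [? [? ?]]].
    eapply der_eq. apply der_mult. apply dfe_ok; auto. apply (ue_deriv e h Phi a b); auto.
    rfix; ring.
Qed.

Lemma sol_iff e h Phi a b x0 : Reg h Phi a b -> in_ioo a b x0 ->
  (is_solution h a b (ue e h Phi x0) <-> forall x, in_ioo a b x -> Ric e h Phi x = 0).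
Proof.
  intros HR H0. split.
  - intros Hs x Hx. destruct (Hs x Hx) as [_ [_ Heq]].
    destruct (ue_two e h Phi a b x0 (ue e h Phi x0) x HR H0 Hx) as [_ H2]; auto.
    rewrite (is_derive_unique _ _ _ H2) in Heq.
    assert (Hp : 0 < ue e h Phi x0 x) by apply exp_pos.
    unfold Ric. apply (Rmult_eq_reg_r (ue e h Phi x0 x)); [|lra]. lra.
  - intros HRic x Hx.
    destruct (ue_two e h Phi a b x0 (ue e h Phi x0) x HR H0 Hx) as [H1 H2]; auto.
    split; [exists (fe e h Phi x * ue e h Phi x0 x); auto|].
    split; [eexists; eauto|].
    rewrite (is_derive_unique _ _ _ H2).
    specialize (HRic x Hx). unfold Ric in HRic.
    replace (dfe e h Phi x + fe e h Phi x ^ 2) with (- h x) by lra. ring.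
Qed.

(* uniqueness via Wronskian with a positive solution *)
Lemma uniq (h u ut ub ft fb dft dfb : R -> R) a b x0 : in_ioo a b x0 ->
  (forall y, in_ioo a b y -> is_derive ut y (ft y * ut y) /\ is_derive ft y (dft y) /\
     dft y + ft y ^ 2 + h y = 0 /\ 0 < ut y) ->
  (forall y, in_ioo a b y -> is_derive ub y (fb y * ub y) /\ is_derive fb y (dfb y) /\
     dfb y + fb y ^ 2 + h y = 0) ->
  ut x0 = 1 -> ub x0 = 1 -> fb x0 <> ft x0 ->
  is_solution h a b u ->
  exists A B, forall y, in_ioo a b y -> u y = A * ut y + B * ub y.
Proof.
  intros H0 Ht Hb Ht0 Hb0 Hf Hs.
  set (B := (Derive u x0 - ft x0 * u x0) / (fb x0 - ft x0)).
  set (A := u x0 - B).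
  exists A, B.
  set (w := fun y => u y - A * ut y - B * ub y).
  set (w1 := fun y => Derive u y - A * (ft y * ut y) - B * (fb y * ub y)).
  assert (Hw : forall y, in_ioo a b y -> is_derive w y (w1 y)).
  { intros y Hy. destruct (Hs y Hy) as [Hu1 _]. destruct (Ht y Hy) as [? _].
    destruct (Hb y Hy) as [? _].
    apply der_minus; [apply der_minus|]; try apply der_scal; auto.
    apply Derive_correct; auto. }
  assert (Hw1 : forall y, in_ioo a b y -> is_derive w1 y (- h y * w y)).
  { intros y Hy. destruct (Hs y Hy) as [_ [Hu2 Hu3]]. destruct (Ht y Hy) as [Dt1 [Dt2 [Er1 ?]]].
    destruct (Hb y Hy) as [Db1 [Db2 Er2]].
    eapply der_eq.
    { apply der_minus; [apply der_minus|].
      - apply Derive_correct; exact Hu2.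
      - apply der_scal. apply der_mult; [exact Dt2 | exact Dt1].
      - apply der_scal. apply der_mult; [exact Db2 | exact Db1]. }
    rfix. unfold w.
    replace (dft y) with (- ft y ^ 2 - h y) by lra.
    replace (dfb y) with (- fb y ^ 2 - h y) by lra.
    replace (Derive (Derive u) y) with (- h y * u y) by lra. ring. }
  set (W := fun y => ut y * w1 y - ft y * ut y * w y).
  assert (HW : forall y, in_ioo a b y -> W y = 0).
  { intros y Hy. transitivity (W x0).
    - apply (const_I W a b); auto. intros z Hz.
      destruct (Ht z Hz) as [Dt1 [Dt2 [Er ?]]].
      eapply der_eq.
      { apply der_minus.
        - apply der_mult; [exact Dt1 | exact (Hw1 z Hz)].
        - apply der_mult; [apply der_mult; [exact Dt2 | exact Dt1] | exact (Hw z Hz)]. }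
      rfix. replace (dft z) with (- ft z ^ 2 - h z) by lra. ring.
    - unfold W, w1, w. rewrite Ht0, Hb0. unfold A, B. field.
      intro Hc; apply Hf; lra. }
  set (V := fun y => w y / ut y).
  assert (HV : forall y, in_ioo a b y -> V y = 0).
  { intros y Hy. transitivity (V x0).
    - apply (const_I V a b); auto. intros z Hz.
      destruct (Ht z Hz) as [Dt1 [Dt2 [Er ?]]].
      eapply der_eq.
      { apply is_derive_div; [exact (Hw z Hz) | exact Dt1 | lra]. }
      rfix. specialize (HW z Hz).
      replace (w1 z * ut z - w z * (ft z * ut z)) with (W z) by (unfold W; ring).
      rewrite HW. unfold Rdiv. ring.
    - unfold V, w. rewrite Ht0, Hb0. unfold A. field. }
  intros y Hy. specialize (HV y Hy). destruct (Ht y Hy) as [_ [_ [_ Hp]]].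
  unfold V, w in HV.
  assert (u y - A * ut y - B * ub y = 0).
  { apply (Rmult_eq_reg_r (/ ut y)). rewrite Rmult_0_l. exact HV.
    apply Rinv_neq_0_compat. lra. }
  lra.
Qed.

Theorem theorem2p10 (h Phi : R -> R) (x0 xm xp : R) :
  (* h is C^1 on R *)
  (forall x, ex_derive h x /\ continuous (Derive h) x) ->
  xm < x0 < xp ->
  (* Phi is C^2 on ]xm, xp[ *)
  (forall x, in_ioo xm xp x ->
     ex_derive Phi x /\ ex_derive (Derive Phi) x /\
     continuous (Derive (Derive Phi)) x) ->
  (forall x, in_ioo xm xp x -> h x <> (Phi x)^2) ->
  (general_solution h xm xp (u_top h Phi x0) (u_bot h Phi x0) <->
   forall x, in_ioo xm xp x -> Phi_equation h Phi x).
Proof.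
  intros Hh Hx0 HP HD.
  assert (HR : Reg h Phi xm xp).
  { intros x Hx. destruct (HP x Hx) as [? [? ?]]. repeat split; auto. apply Hh. }
  assert (Et : u_top h Phi x0 = ue (-1) h Phi x0).
  { unfold u_top, ue. replace (integrand_top h Phi) with (fe (-1) h Phi); auto.
    apply functional_extensionality; intro x. unfold integrand_top, fe, SS, Rdiv. ring. }
  assert (Eb : u_bot h Phi x0 = ue 1 h Phi x0).
  { unfold u_bot, ue. replace (integrand_bot h Phi) with (fe 1 h Phi); auto.
    apply functional_extensionality; intro x. unfold integrand_bot, fe, SS, Rdiv. ring. }
  rewrite Et, Eb.
  split.
  - intros G x Hx.
    assert (Hs : is_solution h xm xp (ue (-1) h Phi x0)).
    { apply (proj2 (G _)). exists 1, 0. intros; ring. }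
    pose proof (proj1 (sol_iff (-1) h Phi xm xp x0 HR Hx0) Hs) as Hs'.
    destruct (HR x Hx) as [_ [_ [_ Hd]]].
    apply EE_Phi; auto. apply (Ric_EE (-1)); auto.
  - intros HPE.
    assert (HRic : forall e, (e = 1 \/ e = -1) -> forall x, in_ioo xm xp x -> Ric e h Phi x = 0).
    { intros e He x Hx. destruct (HR x Hx) as [_ [_ [_ Hd]]].
      apply Ric_EE; auto. apply EE_Phi; auto. }
    intro u. split.
    + intro Hs.
      apply (uniq h u (ue (-1) h Phi x0) (ue 1 h Phi x0) (fe (-1) h Phi) (fe 1 h Phi)
               (dfe (-1) h Phi) (dfe 1 h Phi) xm xp x0); auto.
      * intros y Hy. destruct (HR y Hy) as [? [? [? ?]]].
        split; [apply (ue_deriv _ _ _ xm xp); auto|].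
        split; [apply dfe_ok; auto|].
        split; [apply (HRic (-1)); auto | apply exp_pos].
      * intros y Hy. destruct (HR y Hy) as [? [? [? ?]]].
        split; [apply (ue_deriv _ _ _ xm xp); auto|].
        split; [apply dfe_ok; auto|].
        apply (HRic 1); auto.
      * apply ue_x0.
      * apply ue_x0.
      * intro Heq.
        destruct (HPE x0 Hx0) as [Hp _].
        assert (Hd := HD x0 Hx0).
        assert (HS := SS_pos h Phi x0 Hd).
        assert (Hdiff : fe 1 h Phi x0 - fe (-1) h Phi x0 =
                        2 * Phi x0 * SS h Phi x0 / (h x0 - Phi x0 ^ 2)).
        { unfold fe. field. lra. }
        assert (Hnz : 2 * Phi x0 * SS h Phi x0 / (h x0 - Phi x0 ^ 2) <> 0).
        { unfold Rdiv. apply Rmult_integral_contrapositive_currified.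
          - apply Rmult_integral_contrapositive_currified; [|lra].
            apply Rmult_integral_contrapositive_currified; lra.
          - apply Rinv_neq_0_compat. lra. }
        apply Hnz. rewrite <- Hdiff. rewrite Heq. ring.
    + intros [A [B HAB]] x Hx.
      set (ut := ue (-1) h Phi x0). set (ub := ue 1 h Phi x0).
      set (ft := fe (-1) h Phi). set (fb := fe 1 h Phi).
      set (dft := dfe (-1) h Phi). set (dfb := dfe 1 h Phi).
      destruct (sol_of u (fun y => A * ut y + B * ub y)
         (fun y => A * (ft y * ut y) + B * (fb y * ub y))
         (fun y => A * (dft y * ut y + ft y * (ft y * ut y)) +
                   B * (dfb y * ub y + fb y * (fb y * ub y))) xm xp x) as [D1 D2]; auto.
      * intros y Hy. apply der_plus; apply der_scal; apply (ue_deriv _ _ _ xm xp); auto.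
      * intros y Hy. destruct (HR y Hy) as [? [? [? ?]]].
        apply der_plus; apply der_scal; apply der_mult;
          try (apply dfe_ok; auto); apply (ue_deriv _ _ _ xm xp); auto.
      * split; [eexists; exact D1|].
        split; [eexists; exact D2|].
        rewrite (is_derive_unique _ _ _ D2). rewrite (HAB x Hx).
        assert (R1 := HRic (-1) (or_intror eq_refl) x Hx).
        assert (R2 := HRic 1 (or_introl eq_refl) x Hx).
        unfold Ric in R1, R2. fold ft fb dft dfb in R1, R2.
        rfix. replace (dft x) with (- ft x ^ 2 - h x) by lra.
        replace (dfb x) with (- fb x ^ 2 - h x) by lra.
        unfold ut, ub. rfix. ring.
Qed.
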